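(* There is a universal constant $C$ such that the following holds. Let $G=(V,E,m,w)$ be a weighted graph with an intrinsic metric $\rho$ such that all balls $B_R(x)$ are finite and the jump size $s=\sup_{x\sim y}\rho(x,y)$ is finite, and fix $x_0\in V$. For any ancient solution $u$ of $\partial_t u=\Delta u$ on $V\times(-\infty,0]$ and any $R\ge s$, $$R^2\int_{Q_R}\Gamma(u)+R^4\int_{Q_R}u_t^2\le C\int_{Q_{9R}}u^2.$$
   Context: A weighted graph $G=(V,E,m,w)$ consists of a locally finite, simple, undirected, connected graph $(V,E)$, a symmetric edge weight $w:E\to(0,\infty)$ (extended by $w_{xy}=0$ if $x\not\sim y$), and a vertex weight $m:V\to(0,\infty)$. The Laplacian is $\Delta f(x)=\sum_{y\sim x}\frac{w_{xy}}{m_x}(f(y)-f(x))$. A (pseudo)metric $\rho$ on $V$ is intrinsic if $\sum_{y\sim x}w_{xy}\rho^2(x,y)\le m_x$ for all $x$; $B_R(x)=\{y:\rho(y,x)\le R\}$ and $B_R:=B_R(x_0)$. An ancient solution is a function $u(x,t)$ on $V\times(-\infty,0]$, differentiable in $t$, with $u_t=\partial_t u=\Delta u$. $\Gamma(f)(x)=\frac12\sum_{y}\frac{w_{xy}}{m_x}(f(y)-f(x))^2$, applied to $u(\cdot,t)$ for each $t$. $Q_R=B_R\times[-R^2,0]$ and $\int_{Q_R}F:=\int_{-R^2}^0\sum_{x\in B_R}F(x,t)m_x\,dt$. *)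

(* Defs.v *)
From Stdlib Require Import Reals Lra List Relations ClassicalEpsilon.
From Coquelicot Require Import Coquelicot.
Open Scope R_scope.

Definition finite_set {V : Type} (P : V -> Prop) : Prop :=
  exists l : list V, NoDup l /\ forall y, In y l <-> P y.

(* A chosen enumeration (meaningful when finite_set P holds). *)
Definition finite_enum {V : Type} (P : V -> Prop) : list V :=
  epsilon (inhabits (@nil V)) (fun l => NoDup l /\ forall y, In y l <-> P y).

Definition fsum {V : Type} (P : V -> Prop) (F : V -> R) : R :=
  fold_right Rplus 0 (map F (finite_enum P)).

(* x ~ y iff w x y > 0 (w extended by 0 off edges). *)
Definition adj {V : Type} (w : V -> V -> R) (x y : V) : Prop := 0 < w x y.

Definition weighted_graph {V : Type} (w : V -> V -> R) (m : V -> R) : Prop :=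
  (forall x y, w x y = w y x) /\
  (forall x y, 0 <= w x y) /\
  (forall x, w x x = 0) /\
  (forall x, finite_set (adj w x)) /\
  (forall x, 0 < m x) /\
  (forall x y, clos_refl_trans V (adj w) x y).

Definition pseudometric {V : Type} (rho : V -> V -> R) : Prop :=
  (forall x, rho x x = 0) /\
  (forall x y, 0 <= rho x y) /\
  (forall x y, rho x y = rho y x) /\
  (forall x y z, rho x z <= rho x y + rho y z).

Definition intrinsic_metric {V : Type} (w : V -> V -> R) (m : V -> R)
    (rho : V -> V -> R) : Prop :=
  pseudometric rho /\
  forall x, fsum (adj w x) (fun y => w x y * rho x y ^ 2) <= m x.

Definition rball {V : Type} (rho : V -> V -> R) (x : V) (r : R) (y : V) : Prop :=
  rho y x <= r.

Definition jumps {V : Type} (w : V -> V -> R) (rho : V -> V -> R) (r : R) : Prop :=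
  exists x y, adj w x y /\ r = rho x y.

Definition Laplacian {V : Type} (w : V -> V -> R) (m : V -> R) (f : V -> R) (x : V) : R :=
  fsum (adj w x) (fun y => w x y / m x * (f y - f x)).

Definition Gamma {V : Type} (w : V -> V -> R) (m : V -> R) (f : V -> R) (x : V) : R :=
  / 2 * fsum (adj w x) (fun y => w x y / m x * (f y - f x) ^ 2).

(* Ancient solution on V x (-oo,0]: differentiable in t (left derivative at t = 0),
   with u_t = Laplacian u.  Values of u for t > 0 are irrelevant. *)
Definition ancient_solution {V : Type} (w : V -> V -> R) (m : V -> R)
    (u : V -> R -> R) : Prop :=
  (forall x t, t < 0 -> is_derive (u x) t (Laplacian w m (fun y => u y t) x)) /\
  (forall x, filterlim (fun h => (u x h - u x 0) / h) (at_left 0)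
                       (locally (Laplacian w m (fun y => u y 0) x))).

Definition u_t {V : Type} (u : V -> R -> R) (x : V) (t : R) : R := Derive (u x) t.

Definition intQ {V : Type} (rho : V -> V -> R) (m : V -> R) (x0 : V) (r : R)
    (F : V -> R -> R) : R :=
  RInt (fun t => fsum (rball rho x0 r) (fun x => F x t * m x)) (- r ^ 2) 0.

(* Main.v *)
Require Import Defs.
From Stdlib Require Import Reals Lra Psatz List Permutation Classical.
From Coquelicot Require Import Coquelicot.
Open Scope R_scope.

Definition Lsum {V : Type} (f : V -> R) (l : list V) : R := fold_right Rplus 0 (map f l).

Lemma Lsum_nil {V} (f : V -> R) : Lsum f nil = 0.
Proof. reflexivity. Qed.
Lemma Lsum_cons {V} (f : V -> R) a l : Lsum f (a :: l) = f a + Lsum f l.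
Proof. reflexivity. Qed.
Lemma Lsum_app {V} (f : V -> R) l1 l2 : Lsum f (l1 ++ l2) = Lsum f l1 + Lsum f l2.
Proof. induction l1; simpl; unfold Lsum in *; simpl; [lra|]. rewrite IHl1; lra. Qed.

Lemma Lsum_perm {V} (f : V -> R) l1 l2 : Permutation l1 l2 -> Lsum f l1 = Lsum f l2.
Proof. intro H; induction H; unfold Lsum in *; simpl in *; lra. Qed.

Lemma Lsum_ext {V} (f g : V -> R) l : (forall x, In x l -> f x = g x) -> Lsum f l = Lsum g l.
Proof. induction l; intros H; simpl; [reflexivity|]. rewrite !Lsum_cons, H, IHl; auto. intros; apply H; simpl; auto. left; auto. Qed.

Lemma Lsum_le {V} (f g : V -> R) l : (forall x, In x l -> f x <= g x) -> Lsum f l <= Lsum g l.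
Proof. induction l; intros H; simpl; [unfold Lsum; simpl; lra|]. rewrite !Lsum_cons.
 assert (f a <= g a) by (apply H; left; auto). assert (Lsum f l <= Lsum g l) by (apply IHl; intros; apply H; right; auto). lra. Qed.

Lemma Lsum_plus {V} (f g : V -> R) l : Lsum (fun x => f x + g x) l = Lsum f l + Lsum g l.
Proof. induction l; [unfold Lsum; simpl; lra|]. rewrite !Lsum_cons, IHl; lra. Qed.

Lemma Lsum_scal {V} (c : R) (f : V -> R) l : Lsum (fun x => c * f x) l = c * Lsum f l.
Proof. induction l; [unfold Lsum; simpl; lra|]. rewrite !Lsum_cons, IHl; lra. Qed.

Lemma Lsum_opp {V} (f : V -> R) l : Lsum (fun x => - f x) l = - Lsum f l.
Proof. induction l; [unfold Lsum; simpl; lra|]. rewrite !Lsum_cons, IHl; lra. Qed.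

Lemma Lsum_zero {V} (f : V -> R) l : (forall x, In x l -> f x = 0) -> Lsum f l = 0.
Proof. intro H. rewrite (Lsum_ext f (fun _ => 0)) by auto. induction l; [reflexivity|]. rewrite Lsum_cons, IHl; [lra|]. intros; apply H; right; auto. Qed.

Lemma Lsum_nonneg {V} (f : V -> R) l : (forall x, In x l -> 0 <= f x) -> 0 <= Lsum f l.
Proof. intro H. replace 0 with (Lsum (fun _ : V => 0) l) at 1 by (apply Lsum_zero; auto). apply Lsum_le; auto. Qed.

Lemma Lsum_swap {V W} (F : V -> W -> R) l1 l2 :
  Lsum (fun x => Lsum (fun y => F x y) l2) l1 = Lsum (fun y => Lsum (fun x => F x y) l1) l2.
Proof. induction l1; simpl.
 - symmetry; apply Lsum_zero; intros; reflexivity.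
 - rewrite Lsum_cons, IHl1. rewrite <- Lsum_plus. apply Lsum_ext; intros; rewrite Lsum_cons; reflexivity. Qed.

Lemma Lsum_sub {V} (F : V -> R) l U : NoDup l -> NoDup U -> (forall y, In y l -> In y U) ->
  (forall y, In y U -> ~ In y l -> F y = 0) -> Lsum F l = Lsum F U.
Proof.
  revert U; induction l as [|a l IH]; intros U Hl HU Hsub H0.
  - symmetry; apply Lsum_zero; intros; apply H0; auto.
  - assert (Ha : In a U) by (apply Hsub; left; auto).
    destruct (in_split _ _ Ha) as [U1 [U2 ->]].
    rewrite (Lsum_perm F (U1 ++ a :: U2) (a :: U1 ++ U2)) by (symmetry; apply Permutation_middle).
    rewrite !Lsum_cons. f_equal.
    inversion Hl; subst.
    apply IH; auto.
    + eapply NoDup_remove_1; eauto.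
    + intros y Hy. assert (In y (U1 ++ a :: U2)) by (apply Hsub; right; auto).
      apply in_app_or in H. destruct H as [H|[H|H]]; try (apply in_or_app; auto).
      subst; contradiction.
    + intros y Hy Hn. apply H0. apply in_app_or in Hy; apply in_or_app; destruct Hy; [left|right;right]; auto.
      intros [E|E]; [|contradiction]. subst. apply (NoDup_remove_2 _ _ _ HU); auto.
Qed.

Lemma Lsum_sub_le {V} (F : V -> R) l U : NoDup l -> NoDup U -> (forall y, In y l -> In y U) ->
  (forall y, In y U -> 0 <= F y) -> Lsum F l <= Lsum F U.
Proof.
  revert U; induction l as [|a l IH]; intros U Hl HU Hsub H0.
  - apply Lsum_nonneg; auto.
  - assert (Ha : In a U) by (apply Hsub; left; auto).
    destruct (in_split _ _ Ha) as [U1 [U2 ->]].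
    rewrite (Lsum_perm F (U1 ++ a :: U2) (a :: U1 ++ U2)) by (symmetry; apply Permutation_middle).
    rewrite !Lsum_cons. apply Rplus_le_compat_l.
    inversion Hl; subst.
    apply IH; auto.
    + eapply NoDup_remove_1; eauto.
    + intros y Hy. assert (In y (U1 ++ a :: U2)) by (apply Hsub; right; auto).
      apply in_app_or in H. destruct H as [H|[H|H]]; try (apply in_or_app; auto).
      subst; contradiction.
    + intros y Hy. apply H0. apply in_app_or in Hy; apply in_or_app; destruct Hy; [left|right;right]; auto.
Qed.

Lemma finite_enum_spec {V} (P : V -> Prop) : finite_set P ->
  NoDup (finite_enum P) /\ forall y, In y (finite_enum P) <-> P y.
Proof. intro H. unfold finite_enum. apply (ClassicalEpsilon.epsilon_spec (inhabits (@nil V))). exact H. Qed.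

Lemma fsum_Lsum {V} (P : V -> Prop) F : fsum P F = Lsum F (finite_enum P).
Proof. reflexivity. Qed.

Lemma fsum_U {V} (P : V -> Prop) (F : V -> R) U : finite_set P -> NoDup U ->
  (forall y, P y -> In y U) -> (forall y, In y U -> ~ P y -> F y = 0) -> fsum P F = Lsum F U.
Proof. intros HP HU H1 H2. destruct (finite_enum_spec P HP) as [Hn Hi].
  rewrite fsum_Lsum. apply Lsum_sub; auto. intros y Hy; apply H1, Hi; auto.
  intros y Hy Hn'; apply H2; auto. rewrite <- Hi; auto. Qed.

Lemma fsum_U_le {V} (P : V -> Prop) (F : V -> R) U : finite_set P -> NoDup U ->
  (forall y, P y -> In y U) -> (forall y, In y U -> 0 <= F y) -> fsum P F <= Lsum F U.
Proof. intros HP HU H1 H2. destruct (finite_enum_spec P HP) as [Hn Hi].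
  rewrite fsum_Lsum. apply Lsum_sub_le; auto. intros y Hy; apply H1, Hi; auto. Qed.

Lemma fsum_ext {V} (P : V -> Prop) (F G : V -> R) : (forall y, F y = G y) -> fsum P F = fsum P G.
Proof. intros H; unfold fsum; f_equal; apply map_ext; auto. Qed.

Lemma cont_const (c t0 : R) : continuous (fun _ : R => c) t0.
Proof. apply continuous_const. Qed.
Lemma cont_plus (f g : R -> R) t0 : continuous f t0 -> continuous g t0 -> continuous (fun t => f t + g t) t0.
Proof. intros; apply (continuous_plus f g); auto. Qed.
Lemma cont_minus (f g : R -> R) t0 : continuous f t0 -> continuous g t0 -> continuous (fun t => f t - g t) t0.
Proof. intros; apply (continuous_minus f g); auto. Qed.
Lemma cont_mult (f g : R -> R) t0 : continuous f t0 -> continuous g t0 -> continuous (fun t => f t * g t) t0.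
Proof. intros; apply (continuous_mult f g); auto. Qed.
Lemma cont_pow (f : R -> R) n t0 : continuous f t0 -> continuous (fun t => f t ^ n) t0.
Proof. intros H; induction n; simpl. apply cont_const. apply cont_mult; auto. Qed.
Lemma cont_Lsum {V} (f : V -> R -> R) l t0 : (forall x, In x l -> continuous (fun t => f x t) t0) ->
  continuous (fun t => Lsum (fun x => f x t) l) t0.
Proof. induction l; intros H.
 - unfold Lsum; simpl. apply cont_const.
 - unfold Lsum in *; simpl. apply cont_plus. apply H; left; auto. apply IHl; intros; apply H; right; auto. Qed.

Lemma der_Lsum {V} (f : V -> R -> R) (df : V -> R) l t0 :
  (forall x, In x l -> is_derive (fun t => f x t) t0 (df x)) ->
  is_derive (fun t => Lsum (fun x => f x t) l) t0 (Lsum df l).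
Proof. induction l; intros H.
 - unfold Lsum; simpl. apply (is_derive_const 0 t0).
 - unfold Lsum in *; simpl. apply (is_derive_plus (fun t => f a t) (fun t => fold_right Rplus 0 (map (fun x => f x t) l))).
   apply H; left; auto. apply IHl; intros; apply H; right; auto. Qed.

Lemma der_csq (g : R -> R) c t0 dg : is_derive g t0 dg ->
  is_derive (fun t => c * g t ^ 2) t0 (c * (2 * g t0 * dg)).
Proof. intros H. replace (c * (2 * g t0 * dg)) with (c * (INR 2 * dg * g t0 ^ Init.Nat.pred 2)) by (simpl; ring).
  apply (is_derive_scal (fun t => g t ^ 2)). apply is_derive_pow; auto. Qed.

Lemma der_sub (f g : R -> R) t0 df dg : is_derive f t0 df -> is_derive g t0 dg ->
  is_derive (fun t => f t - g t) t0 (df - dg).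
Proof. intros; apply (is_derive_minus f g); auto. Qed.

Lemma der_ext (f : R -> R) t0 l l' : is_derive f t0 l -> l = l' -> is_derive f t0 l'.
Proof. intros H ->; auto. Qed.

Lemma RInt_lin (f g : R -> R) a b (al be : R) : ex_RInt f a b -> ex_RInt g a b ->
  RInt (fun t => al * f t + be * g t) a b = al * RInt f a b + be * RInt g a b.
Proof. intros Hf Hg.
  assert (E1 := RInt_scal f a b al Hf). assert (E2 := RInt_scal g a b be Hg).
  assert (Hf' := ex_RInt_scal f a b al Hf). assert (Hg' := ex_RInt_scal g a b be Hg).
  assert (E := RInt_plus _ _ a b Hf' Hg'). simpl in *. unfold scal, plus in *; simpl in *.
  unfold mult in *; simpl in *. rewrite E, E1, E2. reflexivity. Qed.

Lemma ex_RInt_cont (f : R -> R) a b : a <= b -> (forall t, a <= t <= b -> continuous f t) -> ex_RInt f a b.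
Proof. intros Hab H. apply (@ex_RInt_continuous R_CompleteNormedModule f). intros z Hz. apply H.
  rewrite Rmin_left, Rmax_right in Hz; auto. Qed.

Lemma RInt_mono_int (f : R -> R) a b c : a <= b -> b <= c -> ex_RInt f a c ->
  (forall t, a < t < b -> 0 <= f t) -> RInt f b c <= RInt f a c.
Proof. intros H1 H2 Hf H.
  assert (Hab : ex_RInt f a b) by (apply (@ex_RInt_Chasles_1 R_CompleteNormedModule f a b c); [lra|auto]).
  assert (Hbc : ex_RInt f b c) by (apply (@ex_RInt_Chasles_2 R_CompleteNormedModule f a b c); [lra|auto]).
  rewrite <- (RInt_Chasles f a b c Hab Hbc). simpl. unfold plus; simpl.
  assert (0 <= RInt f a b) by (apply RInt_ge_0; auto). lra. Qed.

(* FTC with linear time cutoff *)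
Lemma ftc_cut (f df : R -> R) T : 0 < T ->
  (forall t, -T <= t <= 0 -> is_derive f t (df t)) ->
  (forall t, -T <= t <= 0 -> continuous df t) -> 0 <= f 0 ->
  - RInt (fun t => (t + T) / T * df t) (-T) 0 <= / T * RInt f (-T) 0.
Proof. intros HT Hd Hc Hf0.
  assert (Hcf : forall t, -T <= t <= 0 -> continuous f t).
  { intros t Ht. apply (@ex_derive_continuous R_AbsRing R_NormedModule f). eexists; apply Hd; auto. }
  assert (HI : is_RInt (fun t => / T * f t + 1 * ((t + T) / T * df t)) (-T) 0
        (minus ((fun t => (t + T) / T * f t) 0) ((fun t => (t + T) / T * f t) (-T)))).
  { apply (@is_RInt_derive R_CompleteNormedModule (fun t => (t + T) / T * f t) (fun t => / T * f t + 1 * ((t + T) / T * df t))).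
    - intros t Ht. rewrite Rmin_left, Rmax_right in Ht by lra.
      eapply der_ext. apply (is_derive_mult (fun t => (t+T)/T) f). 
      + assert (HH : is_derive (fun t => (t+T)/T) t (/T)) by (auto_derive; [auto| field; lra]). exact HH.
      + apply Hd; auto.
      + intros; apply Rmult_comm.
      + simpl. unfold plus, mult, zero, one; simpl. field. lra.
    - intros t Ht. rewrite Rmin_left, Rmax_right in Ht by lra.
      apply cont_plus. apply cont_mult. apply cont_const. apply Hcf; auto.
      apply cont_mult. apply cont_const. apply cont_mult. apply cont_mult.
      apply (continuous_plus (fun t => t) (fun _ => T)). apply continuous_id. apply continuous_const.
      apply cont_const. apply Hc; auto. }
  apply (@is_RInt_unique R_CompleteNormedModule) in HI. rewrite RInt_lin in HI.
  - unfold minus, plus, opp in HI; simpl in HI.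
    replace ((-T + T)/T) with 0 in HI by (field; lra). replace ((0 + T)/T) with 1 in HI by (field; lra). lra.
  - apply ex_RInt_cont; [lra|]. auto.
  - apply ex_RInt_cont; [lra|]. intros t Ht.
      apply cont_mult. apply cont_mult.
      apply (continuous_plus (fun t => t) (fun _ => T)). apply continuous_id. apply continuous_const.
      apply cont_const. apply Hc; auto.
Qed.

Definition eta {V} (rho : V -> V -> R) (x0 : V) (a : R) (x : V) : R :=
  Rmin 1 (Rmax 0 (2 - rho x x0 / a)).

Lemma clamp_lip p q c : -c <= p - q <= c ->
  - c <= Rmin 1 (Rmax 0 p) - Rmin 1 (Rmax 0 q) <= c.
Proof. intros H. unfold Rmin, Rmax; repeat destruct Rle_dec; lra. Qed.

Lemma eta_bnd {V} (rho : V -> V -> R) x0 a x : 0 <= eta rho x0 a x <= 1.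
Proof. unfold eta, Rmin, Rmax; repeat destruct Rle_dec; lra. Qed.

Lemma eta_one {V} (rho : V -> V -> R) x0 a x : 0 < a -> rho x x0 <= a -> eta rho x0 a x = 1.
Proof. intros Ha H. assert (rho x x0 / a <= 1) by (apply Rmult_le_reg_r with a; auto; unfold Rdiv; rewrite Rmult_assoc, Rinv_l; lra).
  unfold eta, Rmin, Rmax; repeat destruct Rle_dec; lra. Qed.

Lemma eta_zero {V} (rho : V -> V -> R) x0 a x : 0 < a -> 2 * a <= rho x x0 -> eta rho x0 a x = 0.
Proof. intros Ha H. assert (2 <= rho x x0 / a) by (apply Rmult_le_reg_r with a; auto; unfold Rdiv; rewrite Rmult_assoc, Rinv_l; lra).
  unfold eta, Rmin, Rmax; repeat destruct Rle_dec; lra. Qed.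

Lemma eta_nz {V} (rho : V -> V -> R) x0 a x : 0 < a -> eta rho x0 a x <> 0 -> rho x x0 < 2 * a.
Proof. intros Ha H. destruct (Rlt_dec (rho x x0) (2*a)); auto. exfalso; apply H, eta_zero; lra. Qed.

Lemma eta_lip {V} (rho : V -> V -> R) x0 a x y : 0 < a -> pseudometric rho ->
  (eta rho x0 a y - eta rho x0 a x) ^ 2 <= (rho x y / a) ^ 2.
Proof. intros Ha [H0 [Hnn [Hs Ht]]].
  assert (T1 := Ht y x x0). assert (T2 := Ht x y x0). rewrite (Hs y x) in T1.
  assert (Hc : - (rho x y / a) <= (2 - rho y x0 / a) - (2 - rho x x0 / a) <= rho x y / a).
  { replace ((2 - rho y x0 / a) - (2 - rho x x0 / a)) with ((rho x x0 - rho y x0) / a) by (field; lra).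
    unfold Rdiv; split; [rewrite Ropp_mult_distr_l|]; apply Rmult_le_compat_r; try (left; apply Rinv_0_lt_compat; auto); lra. }
  apply clamp_lip in Hc. unfold eta. nra. Qed.

Definition LU {V} (w : V -> V -> R) (m : V -> R) (U : list V) (u : V -> R -> R) (x : V) (t : R) :=
  Lsum (fun y => w x y / m x * (u y t - u x t)) U.
Definition GU {V} (w : V -> V -> R) (m : V -> R) (U : list V) (u : V -> R -> R) (x : V) (t : R) :=
  / 2 * Lsum (fun y => w x y / m x * (u y t - u x t) ^ 2) U.

Record setting {V} (w : V -> V -> R) (m : V -> R) (rho : V -> V -> R) (x0 : V) (r : R)
   (U : list V) (u du : V -> R -> R) : Prop := {
  s_sym : forall x y, w x y = w y x;
  s_wnn : forall x y, 0 <= w x y;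
  s_m : forall x, 0 < m x;
  s_pm : pseudometric rho;
  s_r : 0 < r;
  s_jmp : forall x y, 0 < w x y -> rho x y <= r;
  s_nd : NoDup U;
  s_in : forall y, In y U <-> rho y x0 <= 9 * r;
  s_intr : forall x, rho x x0 <= 8 * r -> Lsum (fun y => w x y * rho x y ^ 2) U <= m x;
  s_der : forall x t, t <= 0 -> is_derive (u x) t (du x t);
  s_du : forall x t, rho x x0 <= 8 * r -> du x t = LU w m U u x t
}.


Lemma polyA ex ey ux uy : let D := uy - ux in
  ex^2*ux*D - ey^2*uy*D <= -/4*(ex^2*D^2) + (ey-ex)^2*ux^2 + (ey-ex)^2*uy^2.
Proof. intros. unfold D.
pose proof (pow2_ge_0 ((ex+ey)*(uy-ux)/2 + (ey-ex)*(ux+uy))).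
pose proof (pow2_ge_0 ((ex-ey)*(uy-ux))). pose proof (pow2_ge_0 ((ey-ex)*(ux-uy))). pose proof (pow2_ge_0 (ex*(uy-ux))). pose proof (pow2_ge_0 (ey*(uy-ux))).
nra. Qed.

Lemma Lsum2_swap {W} (F : W -> W -> R) l : Lsum (fun x => Lsum (fun y => F x y) l) l = Lsum (fun x => Lsum (fun y => F y x) l) l.
Proof. apply Lsum_swap. Qed.

Lemma Lsum2_plus {W} (F G : W -> W -> R) l : Lsum (fun x => Lsum (fun y => F x y + G x y) l) l =
  Lsum (fun x => Lsum (fun y => F x y) l) l + Lsum (fun x => Lsum (fun y => G x y) l) l.
Proof. rewrite <- Lsum_plus. apply Lsum_ext; intros. apply Lsum_plus. Qed.

Lemma Lsum2_le {W} (F G : W -> W -> R) l : (forall x y, In x l -> In y l -> F x y <= G x y) ->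
  Lsum (fun x => Lsum (fun y => F x y) l) l <= Lsum (fun x => Lsum (fun y => G x y) l) l.
Proof. intros H. apply Lsum_le; intros. apply Lsum_le; intros. auto. Qed.

Lemma polyB ex ey vx vy D r q : 0 < r -> 0 <= q -> (ey - ex <> 0 -> 1 <= q) ->
  ex^2*vx*D - ey^2*vy*D <= - (ex*ey*(vy-vx)*D) + /2 * r^2 * (ey-ex)^2 * (ex^2*vx^2 + ey^2*vy^2) + q * D^2 / r^2.
Proof.
intros Hr Hq Hd.
destruct (Req_dec (ey - ex) 0) as [E|E].
- assert (ey = ex) by lra. subst ey. assert (0 <= q * D^2 / r^2).
  { apply Rmult_le_pos. apply Rmult_le_pos; auto. apply pow2_ge_0. left; apply Rinv_0_lt_compat, pow_lt; auto. }
  nra.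
- specialize (Hd E).
  set (P := ey*vy + ex*vx). set (d := ey - ex).
  assert (Hid : ex^2*vx*D - ey^2*vy*D = - (ex*ey*(vy-vx)*D) - d*P*D) by (unfold P, d; ring).
  rewrite Hid.
  assert (H1 : - (d*P*D) <= /4 * r^2 * d^2 * P^2 + D^2 / r^2).
  { pose proof (pow2_ge_0 (r*d*P/2 + D/r)).
    replace (/4 * r^2 * d^2 * P^2 + D^2 / r^2) with ((r*d*P/2 + D/r)^2 - d*P*D) by (field; lra). lra. }
  assert (H2 : P^2 <= 2 * (ex^2*vx^2 + ey^2*vy^2)) by (unfold P; pose proof (pow2_ge_0 (ey*vy - ex*vx)); nra).
  assert (H3 : D^2/r^2 <= q * D^2/r^2).
  { unfold Rdiv. rewrite Rmult_assoc. rewrite <- (Rmult_1_l (D^2 * / r^2)) at 1. apply Rmult_le_compat_r; auto.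
    apply Rmult_le_pos. apply pow2_ge_0. left; apply Rinv_0_lt_compat, pow_lt; auto. }
  assert (H4: 0 <= r^2 * d^2) by (apply Rmult_le_pos; apply pow2_ge_0).
  nra.
Qed.

Definition indic {V} (rho : V -> V -> R) (x0 : V) (b : R) (x : V) : R := if Rle_dec (rho x x0) b then 1 else 0.

Lemma Lsum2_scal {W} c (F : W -> W -> R) l : Lsum (fun x => Lsum (fun y => c * F x y) l) l =
  c * Lsum (fun x => Lsum (fun y => F x y) l) l.
Proof. rewrite <- Lsum_scal. apply Lsum_ext; intros. apply Lsum_scal. Qed.

Section S.
Context {V : Type} (w : V -> V -> R) (m : V -> R) (rho : V -> V -> R) (x0 : V) (r : R)
   (U : list V) (u du : V -> R -> R) (HS : setting w m rho x0 r U u du).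

Lemma mLU x t : m x * LU w m U u x t = Lsum (fun y => w x y * (u y t - u x t)) U.
Proof. unfold LU. rewrite <- Lsum_scal. apply Lsum_ext; intros. assert (0 < m x) by apply (s_m _ _ _ _ _ _ _ _ HS). cbv beta. field. lra. Qed.

Lemma mGU x t : 2 * (GU w m U u x t * m x) = Lsum (fun y => w x y * (u y t - u x t) ^ 2) U.
Proof. unfold GU. replace (2 * (/ 2 * Lsum (fun y => w x y / m x * (u y t - u x t) ^ 2) U * m x)) with
  (m x * Lsum (fun y => w x y / m x * (u y t - u x t) ^ 2) U) by field.
  rewrite <- Lsum_scal. apply Lsum_ext; intros. assert (0 < m x) by apply (s_m _ _ _ _ _ _ _ _ HS). cbv beta. field. lra. Qed.

Lemma GU_nn x t : 0 <= GU w m U u x t * m x.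
Proof. assert (0 <= Lsum (fun y => w x y * (u y t - u x t) ^ 2) U).
  { apply Lsum_nonneg; intros. apply Rmult_le_pos. apply (s_wnn _ _ _ _ _ _ _ _ HS). apply pow2_ge_0. }
  rewrite <- mGU in H. lra. Qed.

Lemma neighbor_far x y : 0 < w x y -> rho y x0 >= rho x x0 - r.
Proof. intros H. destruct (s_pm _ _ _ _ _ _ _ _ HS) as [_ [_ [_ Ht]]].
  assert (T := Ht x y x0). assert (J := s_jmp _ _ _ _ _ _ _ _ HS x y H). lra. Qed.

Lemma grad_eta a x : 0 < a -> 2 * a <= 7 * r -> In x U ->
  Lsum (fun y => w x y * (eta rho x0 a y - eta rho x0 a x) ^ 2) U <= m x / a ^ 2.
Proof. intros Ha Ha7 Hx.
  destruct (Rle_dec (rho x x0) (8 * r)) as [Hc|Hc].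
  - apply Rle_trans with (Lsum (fun y => / a ^ 2 * (w x y * rho x y ^ 2)) U).
    + apply Lsum_le; intros y Hy. replace (/ a ^ 2 * (w x y * rho x y ^ 2)) with (w x y * (rho x y / a) ^ 2) by (field; lra).
      apply Rmult_le_compat_l. apply (s_wnn _ _ _ _ _ _ _ _ HS). apply eta_lip; auto. apply (s_pm _ _ _ _ _ _ _ _ HS).
    + rewrite Lsum_scal. unfold Rdiv. rewrite (Rmult_comm (m x)). apply Rmult_le_compat_l.
      left; apply Rinv_0_lt_compat, pow_lt; auto. apply (s_intr _ _ _ _ _ _ _ _ HS); auto.
  - rewrite Lsum_zero.
    + apply Rmult_le_pos. left; apply (s_m _ _ _ _ _ _ _ _ HS). left; apply Rinv_0_lt_compat, pow_lt; auto.
    + intros y Hy. cbv beta. assert (Hr := s_r _ _ _ _ _ _ _ _ HS).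
      destruct (Rle_lt_or_eq_dec 0 (w x y) (s_wnn _ _ _ _ _ _ _ _ HS x y)) as [Hw|Hw].
      * assert (F := neighbor_far x y Hw). rewrite (eta_zero rho x0 a x), (eta_zero rho x0 a y); auto; try lra.
      * rewrite <- Hw; ring.
Qed.


Lemma keyA a t : 0 < a -> 2 * a <= 7 * r ->
  Lsum (fun x => m x * eta rho x0 a x ^ 2 * (2 * u x t * LU w m U u x t)) U <=
  - / 2 * Lsum (fun x => eta rho x0 a x ^ 2 * (GU w m U u x t * m x)) U
  + 2 / a ^ 2 * Lsum (fun x => u x t ^ 2 * m x) U.
Proof. intros Ha Ha7.
  set (e := eta rho x0 a).
  set (A := fun x y => e x ^ 2 * u x t * (w x y * (u y t - u x t))).
  assert (E1 : Lsum (fun x => m x * e x ^ 2 * (2 * u x t * LU w m U u x t)) U =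
     Lsum (fun x => Lsum (fun y => A x y) U) U + Lsum (fun x => Lsum (fun y => A y x) U) U).
  { rewrite <- (Lsum2_swap A U). rewrite <- Lsum_plus. apply Lsum_ext; intros x Hx.
    replace (m x * e x ^ 2 * (2 * u x t * LU w m U u x t)) with (2 * (e x ^ 2 * u x t) * (m x * LU w m U u x t)) by ring.
    rewrite mLU. unfold A. cbv beta. rewrite Lsum_scal. ring. }
  rewrite E1. rewrite <- Lsum2_plus.
  set (B1 := fun x y => e x ^ 2 * (w x y * (u y t - u x t) ^ 2)).
  set (B2 := fun x y => u x t ^ 2 * (w x y * (e y - e x) ^ 2)).
  apply Rle_trans with (Lsum (fun x => Lsum (fun y => -/4 * B1 x y + (B2 x y + B2 y x)) U) U).
  { apply Lsum2_le; intros x y Hx Hy. unfold A, B1, B2. rewrite (s_sym _ _ _ _ _ _ _ _ HS y x).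
    assert (P := polyA (e x) (e y) (u x t) (u y t)). simpl in P.
    assert (W := s_wnn _ _ _ _ _ _ _ _ HS x y).
    replace (e x ^ 2 * u x t * (w x y * (u y t - u x t)) + e y ^ 2 * u y t * (w x y * (u x t - u y t)))
      with (w x y * (e x ^ 2 * u x t * (u y t - u x t) - e y ^ 2 * u y t * (u y t - u x t))) by ring.
    replace (- / 4 * (e x ^ 2 * (w x y * (u y t - u x t) ^ 2)) + (u x t ^ 2 * (w x y * (e y - e x) ^ 2) + u y t ^ 2 * (w x y * (e x - e y) ^ 2)))
      with (w x y * (- / 4 * (e x ^ 2 * (u y t - u x t) ^ 2) + (e y - e x) ^ 2 * u x t ^ 2 + (e y - e x) ^ 2 * u y t ^ 2)) by ring.
    apply Rmult_le_compat_l; auto. }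
  rewrite Lsum2_plus, Lsum2_plus. rewrite (Lsum2_swap (fun x y => B2 y x)).
  assert (E2 : Lsum (fun x => Lsum (fun y => - / 4 * B1 x y) U) U = - / 2 * Lsum (fun x => e x ^ 2 * (GU w m U u x t * m x)) U).
  { rewrite <- Lsum_scal. apply Lsum_ext; intros x Hx. unfold B1. rewrite Lsum_scal, Lsum_scal.
    cbv beta. rewrite <- (mGU x t). field. }
  assert (E3 : Lsum (fun x => Lsum (fun y => B2 x y) U) U <= / a ^ 2 * Lsum (fun x => u x t ^ 2 * m x) U).
  { rewrite <- Lsum_scal. apply Lsum_le; intros x Hx. unfold B2. rewrite Lsum_scal.
    assert (GE := grad_eta a x Ha Ha7 Hx). fold e in GE.
    replace (/ a ^ 2 * (u x t ^ 2 * m x)) with (u x t ^ 2 * (m x / a ^ 2)) by (field; lra).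
    apply Rmult_le_compat_l; auto. apply pow2_ge_0. }
  rewrite E2. unfold Rdiv. lra.
Qed.


Lemma keyB t :
  Lsum (fun x => eta rho x0 r x ^ 2 * (LU w m U u x t ^ 2 * m x)) U <=
  - / 2 * Lsum (fun x => Lsum (fun y => w x y * (eta rho x0 r x * eta rho x0 r y) *
         (2 * (u y t - u x t) * (LU w m U u y t - LU w m U u x t))) U) U
  + 4 / r ^ 2 * Lsum (fun x => indic rho x0 (2 * r) x * (GU w m U u x t * m x)) U.
Proof.
  assert (Hr := s_r _ _ _ _ _ _ _ _ HS).
  set (e := eta rho x0 r). set (v := fun x => LU w m U u x t). set (i := indic rho x0 (2 * r)).
  set (K := Lsum (fun x => e x ^ 2 * (LU w m U u x t ^ 2 * m x)) U).
  set (A := fun x y => e x ^ 2 * v x * (w x y * (u y t - u x t))).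
  assert (E1 : 2 * K = Lsum (fun x => Lsum (fun y => A x y) U) U + Lsum (fun x => Lsum (fun y => A y x) U) U).
  { rewrite <- (Lsum2_swap A U). unfold K. rewrite <- Lsum_scal, <- Lsum_plus. apply Lsum_ext; intros x Hx.
    replace (2 * (e x ^ 2 * (LU w m U u x t ^ 2 * m x))) with (2 * (e x ^ 2 * v x) * (m x * LU w m U u x t)) by (unfold v; ring).
    rewrite mLU. unfold A. cbv beta. rewrite Lsum_scal. ring. }
  rewrite <- Lsum2_plus in E1.
  set (B2 := fun x y => e x ^ 2 * v x ^ 2 * (w x y * (e y - e x) ^ 2)).
  set (B3 := fun x y => i x * (w x y * (u y t - u x t) ^ 2)).
  set (B1 := fun x y => w x y * (e x * e y) * (2 * (u y t - u x t) * (v y - v x))).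
  assert (E2 : 2 * K <= Lsum (fun x => Lsum (fun y => -/2 * B1 x y + (/2 * r^2 * (B2 x y + B2 y x) + / r ^ 2 * (B3 x y + B3 y x))) U) U).
  { rewrite E1. apply Lsum2_le; intros x y Hx Hy. unfold A, B1, B2, B3. rewrite (s_sym _ _ _ _ _ _ _ _ HS y x).
    assert (W := s_wnn _ _ _ _ _ _ _ _ HS x y).
    assert (Hq : 0 <= i x + i y) by (unfold i, indic; repeat destruct Rle_dec; lra).
    assert (Hq1 : e y - e x <> 0 -> 1 <= i x + i y).
    { intros Hd. unfold i, indic. destruct (Rle_dec (rho x x0) (2 * r)); destruct (Rle_dec (rho y x0) (2 * r)); try lra.
      exfalso; apply Hd. unfold e. rewrite !eta_zero; auto; lra. }
    assert (P := polyB (e x) (e y) (v x) (v y) (u y t - u x t) r (i x + i y) Hr Hq Hq1).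
    replace (e x ^ 2 * v x * (w x y * (u y t - u x t)) + e y ^ 2 * v y * (w x y * (u x t - u y t)))
      with (w x y * (e x ^ 2 * v x * (u y t - u x t) - e y ^ 2 * v y * (u y t - u x t))) by ring.
    apply Rle_trans with (w x y * (- (e x * e y * (v y - v x) * (u y t - u x t)) + / 2 * r ^ 2 * (e y - e x) ^ 2 * (e x ^ 2 * v x ^ 2 + e y ^ 2 * v y ^ 2) + (i x + i y) * (u y t - u x t) ^ 2 / r ^ 2)).
    apply Rmult_le_compat_l; auto.
    right. field. lra. }
  rewrite Lsum2_plus, Lsum2_plus in E2.
  rewrite (Lsum2_scal (-/2) B1 U), (Lsum2_scal (/ 2 * r ^ 2) (fun x y => B2 x y + B2 y x) U),
     (Lsum2_scal (/ r ^ 2) (fun x y => B3 x y + B3 y x) U) in E2.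
  rewrite (Lsum2_plus B2 (fun x y => B2 y x)), (Lsum2_plus B3 (fun x y => B3 y x)) in E2.
  rewrite <- (Lsum2_swap B2 U), <- (Lsum2_swap B3 U) in E2.
  assert (E3 : Lsum (fun x => Lsum (fun y => B2 x y) U) U <= K / r ^ 2).
  { unfold K, Rdiv. rewrite Rmult_comm, <- Lsum_scal. apply Lsum_le; intros x Hx. unfold B2. cbv beta. rewrite Lsum_scal.
    assert (GE := grad_eta r x Hr ltac:(lra) Hx). fold e in GE.
    replace (/ r ^ 2 * (e x ^ 2 * (LU w m U u x t ^ 2 * m x))) with (e x ^ 2 * v x ^ 2 * (m x / r ^ 2)) by (unfold v; field; lra).
    apply Rmult_le_compat_l; auto. apply Rmult_le_pos; apply pow2_ge_0. }
  assert (E4 : Lsum (fun x => Lsum (fun y => B3 x y) U) U = 2 * Lsum (fun x => i x * (GU w m U u x t * m x)) U).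
  { rewrite <- Lsum_scal. apply Lsum_ext; intros x Hx. unfold B3. cbv beta. rewrite Lsum_scal. rewrite <- (mGU x t). ring. }
  fold v. fold i.
  assert (0 < / r ^ 2) by (apply Rinv_0_lt_compat, pow_lt; auto).
  assert (r ^ 2 * (K / r ^ 2) = K) by (field; lra).
  assert (Hm : / 2 * r ^ 2 * (Lsum (fun x => Lsum (fun y => B2 x y) U) U + Lsum (fun x => Lsum (fun y => B2 x y) U) U) <= K).
  { apply Rle_trans with (/2 * r ^ 2 * (K / r ^ 2 + K / r ^ 2)). apply Rmult_le_compat_l. 
    apply Rmult_le_pos; [lra| apply pow2_ge_0]. lra. lra. }
  rewrite E4 in E2. unfold B1, v in E2. cbv beta in E2. lra.
Qed.

End S.

Section S4.
Context {V : Type} (w : V -> V -> R) (m : V -> R) (rho : V -> V -> R) (x0 : V) (r : R)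
   (U : list V) (u du : V -> R -> R) (HS : setting w m rho x0 r U u du).

Lemma u_cont x t : t <= 0 -> continuous (u x) t.
Proof. intros Ht. apply (@ex_derive_continuous R_AbsRing R_NormedModule (u x)). eexists.
  apply (s_der _ _ _ _ _ _ _ _ HS); auto. Qed.

Lemma cont_id t0 : continuous (fun t : R => t) t0.
Proof. apply continuous_id. Qed.
Lemma cont_div (f g : R -> R) t0 : continuous f t0 -> continuous (fun t => / g t) t0 -> continuous (fun t => f t / g t) t0.
Proof. intros; unfold Rdiv; apply cont_mult; auto. Qed.

Ltac cont1 := match goal with
 | |- continuous (fun t => ?c) _ => apply cont_const
 | |- continuous (fun t => t) _ => apply cont_id
 | |- continuous (fun t => Lsum _ _) _ => apply cont_Lsum; intros ? ?
 | |- continuous (fun t => _ + _) _ => apply cont_plus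
 | |- continuous (fun t => _ - _) _ => apply cont_minus
 | |- continuous (fun t => _ * _) _ => apply cont_mult
 | |- continuous (fun t => _ / _) _ => apply cont_div
 | |- continuous (fun t => _ ^ _) _ => apply cont_pow
 | |- continuous (fun t => u _ t) _ => apply u_cont; lra
 | |- continuous (u _) _ => apply u_cont; lra
 end.
Ltac cont := repeat cont1.

Lemma coreA :
  RInt (fun t => Lsum (fun x => eta rho x0 (3 * r) x ^ 2 * (GU w m U u x t * m x)) U) (- (9 * r ^ 2)) 0
  <= 10 / (9 * r ^ 2) * RInt (fun t => Lsum (fun x => u x t ^ 2 * m x) U) (- (81 * r ^ 2)) 0.
Proof.
  assert (Hr := s_r _ _ _ _ _ _ _ _ HS).
  set (a := 3 * r). set (T := 18 * r ^ 2). set (e := eta rho x0 a).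
  assert (Ha : 0 < a) by (unfold a; lra).
  assert (HT : 0 < T) by (unfold T; nra).
  pose (I := fun t => Lsum (fun x => m x * e x ^ 2 * u x t ^ 2) U).
  pose (dI := fun t => Lsum (fun x => m x * e x ^ 2 * (2 * u x t * LU w m U u x t)) U).
  pose (G := fun t => Lsum (fun x => e x ^ 2 * (GU w m U u x t * m x)) U).
  pose (M := fun t => Lsum (fun x => u x t ^ 2 * m x) U).
  pose (ps := fun t => (t + T) / T).
  pose (PG := fun t => ps t * G t). pose (PdI := fun t => ps t * dI t). pose (PM := fun t => ps t * M t).
  assert (Hder : forall t, -T <= t <= 0 -> is_derive I t (dI t)).
  { intros t Ht. unfold I. eapply der_ext. apply der_Lsum. intros x Hx. apply der_csq. apply (s_der _ _ _ _ _ _ _ _ HS). lra.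
    unfold dI. apply Lsum_ext. intros x Hx. destruct (Req_dec (e x) 0) as [E|E].
    - rewrite E; ring.
    - rewrite (s_du _ _ _ _ _ _ _ _ HS); auto. apply eta_nz in E; auto. unfold a in E; lra. }
  assert (Hcont : forall f, (f = I \/ f = dI \/ f = G \/ f = M \/ f = PG \/ f = PdI \/ f = PM) ->
       forall t, t <= 0 -> continuous f t).
  { intros f Hf t Ht. destruct Hf as [->|[->|[->|[->|[->|[->| ->]]]]]];
    unfold PG, PdI, PM, ps, I, dI, G, M, GU, LU; cont. }
  assert (Hex : forall f, (f = I \/ f = dI \/ f = G \/ f = M \/ f = PG \/ f = PdI \/ f = PM) ->
       forall b, b <= 0 -> ex_RInt f b 0).
  { intros f Hf b Hb. apply ex_RInt_cont; auto. intros; apply Hcont; auto; lra. }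
  assert (FT := ftc_cut I dI T HT Hder ltac:(intros; apply Hcont; auto; lra)
                   ltac:(unfold I; apply Lsum_nonneg; intros; apply Rmult_le_pos; [apply Rmult_le_pos; [left; apply (s_m _ _ _ _ _ _ _ _ HS)| apply pow2_ge_0] | apply pow2_ge_0])).
  change (RInt (fun t => (t + T) / T * dI t) (-T) 0) with (RInt PdI (-T) 0) in FT.
  assert (HGn : forall t, 0 <= G t) by (intros; unfold G; apply Lsum_nonneg; intros; apply Rmult_le_pos; [apply pow2_ge_0| apply (GU_nn _ _ _ _ _ _ _ _ HS)]).
  assert (HMn : forall t, 0 <= M t) by (intros; unfold M; apply Lsum_nonneg; intros; apply Rmult_le_pos; [apply pow2_ge_0| left; apply (s_m _ _ _ _ _ _ _ _ HS)]).
  assert (HIM : forall t, I t <= M t).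
  { intros t; unfold I, M; apply Lsum_le; intros x Hx. assert (HE := eta_bnd rho x0 a x). fold e in HE.
    assert (0 < m x) by apply (s_m _ _ _ _ _ _ _ _ HS). assert (0 <= u x t ^ 2) by apply pow2_ge_0.
    assert (e x ^ 2 <= 1) by nra. assert (0 <= (1 - e x ^ 2) * (u x t ^ 2 * m x)) by (apply Rmult_le_pos; nra). nra. }
  assert (S1 : RInt (fun t => / 2 * PG t + 0 * PG t) (-T) 0 <= RInt (fun t => (-1) * PdI t + (2 / a ^ 2) * PM t) (-T) 0).
  { apply RInt_le. lra.
    apply ex_RInt_cont. lra. intros t Ht. apply cont_plus; apply cont_mult; try apply cont_const; (apply Hcont; [auto 10|lra]).
    apply ex_RInt_cont. lra. intros t Ht. apply cont_plus; apply cont_mult; try apply cont_const; (apply Hcont; [auto 10|lra]).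
    intros t Ht. assert (K := keyA w m rho x0 r U u du HS a t Ha ltac:(unfold a; lra)). fold e in K.
    change (dI t <= - / 2 * G t + 2 / a ^ 2 * M t) in K.
    assert (0 <= ps t) by (unfold ps; apply Rmult_le_pos; [lra| left; apply Rinv_0_lt_compat; auto]).
    unfold PG, PdI, PM.
    assert (ps t * dI t <= ps t * (- / 2 * G t + 2 / a ^ 2 * M t)) by (apply Rmult_le_compat_l; auto).
    lra. }
  rewrite !RInt_lin in S1 by (apply Hex; auto 10; lra).
  assert (S2 : RInt PM (-T) 0 <= RInt M (-T) 0).
  { apply RInt_le; try lra; try (apply Hex; auto 10; lra). intros t Ht. unfold PM, ps.
    assert ((t + T) / T <= 1) by (apply Rmult_le_reg_r with T; auto; unfold Rdiv; rewrite Rmult_assoc, Rinv_l; lra).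
    assert (0 <= (t + T) / T) by (apply Rmult_le_pos; [lra| left; apply Rinv_0_lt_compat; auto]).
    specialize (HMn t). nra. }
  assert (S3 : RInt I (-T) 0 <= RInt M (-T) 0).
  { apply RInt_le; try lra; try (apply Hex; auto 10; lra). intros; auto. }
  assert (S4 : RInt G (-(9 * r ^ 2)) 0 <= RInt (fun t => 2 * PG t + 0 * PG t) (-(9 * r ^ 2)) 0).
  { apply RInt_le. nra. apply Hex; auto 10; nra.
    apply ex_RInt_cont. nra. intros t Ht. apply cont_plus; apply cont_mult; try apply cont_const; apply Hcont; auto 10; lra.
    intros t Ht. unfold PG, ps.
    assert (/2 <= (t + T) / T) by (apply Rmult_le_reg_r with T; auto; unfold Rdiv; rewrite Rmult_assoc, Rinv_l; unfold T in *; lra).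
    specialize (HGn t). nra. }
  rewrite RInt_lin in S4 by (apply Hex; auto 10; nra).
  assert (S5 : RInt PG (-(9 * r ^ 2)) 0 <= RInt PG (-T) 0).
  { apply RInt_mono_int. unfold T; nra. nra. apply Hex; auto 10; lra.
    intros t Ht. unfold PG, ps. apply Rmult_le_pos; auto. apply Rmult_le_pos; [lra| left; apply Rinv_0_lt_compat; auto]. }
  assert (S6 : RInt M (-T) 0 <= RInt M (-(81 * r ^ 2)) 0).
  { apply RInt_mono_int. unfold T; nra. lra. apply Hex; auto 10; nra. intros; auto. }
  assert (Hco : 4 * (/ T + 2 / a ^ 2) = 10 / (9 * r ^ 2)) by (unfold T, a; field; lra).
  assert (S7 : RInt G (-(9 * r ^ 2)) 0 <= 4 * (/ T + 2 / a ^ 2) * RInt M (-T) 0).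
  { assert (0 <= / T) by (left; apply Rinv_0_lt_compat; auto).
    assert (0 <= 2 / a ^ 2) by (unfold Rdiv; apply Rmult_le_pos; [lra| left; apply Rinv_0_lt_compat, pow_lt; auto]).
    assert (/ T * RInt I (-T) 0 <= / T * RInt M (-T) 0) by (apply Rmult_le_compat_l; auto).
    assert (2 / a ^ 2 * RInt PM (-T) 0 <= 2 / a ^ 2 * RInt M (-T) 0) by (apply Rmult_le_compat_l; auto).
    nra. }
  rewrite Hco in S7. 
  assert (0 <= 10 / (9 * r ^ 2)) by (rewrite <- Hco; assert (0 < /T) by (apply Rinv_0_lt_compat; auto); assert (0 < 2 / a^2) by (unfold Rdiv; apply Rmult_lt_0_compat; [lra| apply Rinv_0_lt_compat, pow_lt; auto]); lra).
  apply Rle_trans with (1 := S7). apply Rmult_le_compat_l; auto.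
Qed.


Lemma coreB :
  RInt (fun t => Lsum (fun x => eta rho x0 r x ^ 2 * (LU w m U u x t ^ 2 * m x)) U) (- (r ^ 2)) 0
  <= 9 / r ^ 2 * RInt (fun t => Lsum (fun x => eta rho x0 (3 * r) x ^ 2 * (GU w m U u x t * m x)) U) (- (9 * r ^ 2)) 0.
Proof.
  assert (Hr := s_r _ _ _ _ _ _ _ _ HS).
  set (T := 2 * r ^ 2). set (e := eta rho x0 r). set (i := indic rho x0 (2 * r)).
  assert (HT : 0 < T) by (unfold T; nra).
  pose (F := fun t => Lsum (fun x => Lsum (fun y => w x y * (e x * e y) * (u y t - u x t) ^ 2) U) U).
  pose (dF := fun t => Lsum (fun x => Lsum (fun y => w x y * (e x * e y) *
         (2 * (u y t - u x t) * (LU w m U u y t - LU w m U u x t))) U) U).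
  pose (K := fun t => Lsum (fun x => e x ^ 2 * (LU w m U u x t ^ 2 * m x)) U).
  pose (Gi := fun t => Lsum (fun x => i x * (GU w m U u x t * m x)) U).
  pose (G3 := fun t => Lsum (fun x => eta rho x0 (3 * r) x ^ 2 * (GU w m U u x t * m x)) U).
  pose (ps := fun t => (t + T) / T).
  pose (PK := fun t => ps t * K t). pose (PdF := fun t => ps t * dF t). pose (PGi := fun t => ps t * Gi t).
  assert (Hder : forall t, -T <= t <= 0 -> is_derive F t (dF t)).
  { intros t Ht. unfold F. eapply der_ext. apply der_Lsum. intros x Hx. apply der_Lsum. intros y Hy.
    apply der_csq. apply der_sub; apply (s_der _ _ _ _ _ _ _ _ HS); lra.
    unfold dF. apply Lsum_ext. intros x Hx. apply Lsum_ext. intros y Hy.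
    destruct (Req_dec (e x * e y) 0) as [E|E].
    - rewrite E; ring.
    - assert (e x <> 0) by (intro Z; apply E; rewrite Z; ring).
      assert (e y <> 0) by (intro Z; apply E; rewrite Z; ring).
      apply eta_nz in H; auto. apply eta_nz in H0; auto.
      rewrite !(s_du _ _ _ _ _ _ _ _ HS); auto; lra. }
  assert (Hcont : forall f, (f = F \/ f = dF \/ f = K \/ f = Gi \/ f = G3 \/ f = PK \/ f = PdF \/ f = PGi) ->
       forall t, t <= 0 -> continuous f t).
  { intros f Hf t Ht. destruct Hf as [->|[->|[->|[->|[->|[->|[->| ->]]]]]]];
    unfold PK, PdF, PGi, ps, F, dF, K, Gi, G3, GU, LU; cont. }
  assert (Hex : forall f, (f = F \/ f = dF \/ f = K \/ f = Gi \/ f = G3 \/ f = PK \/ f = PdF \/ f = PGi) ->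
       forall b, b <= 0 -> ex_RInt f b 0).
  { intros f Hf b Hb. apply ex_RInt_cont; auto. intros; apply Hcont; auto; lra. }
  assert (Hen : forall x, 0 <= e x <= 1) by (intros; apply eta_bnd).
  assert (Hin : forall x, 0 <= i x <= 1) by (intros; unfold i, indic; destruct Rle_dec; lra).
  assert (HFn : forall t, 0 <= F t).
  { intros; unfold F; apply Lsum_nonneg; intros x Hx; apply Lsum_nonneg; intros y Hy.
    apply Rmult_le_pos; [apply Rmult_le_pos|apply pow2_ge_0]. apply (s_wnn _ _ _ _ _ _ _ _ HS).
    apply Rmult_le_pos; apply Hen. }
  assert (FT := ftc_cut F dF T HT Hder ltac:(intros; apply Hcont; auto; lra) (HFn 0)).
  change (RInt (fun t => (t + T) / T * dF t) (-T) 0) with (RInt PdF (-T) 0) in FT.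
  assert (HGin : forall t, 0 <= Gi t) by (intros; unfold Gi; apply Lsum_nonneg; intros; apply Rmult_le_pos; [apply Hin| apply (GU_nn _ _ _ _ _ _ _ _ HS)]).
  assert (HG3n : forall t, 0 <= G3 t) by (intros; unfold G3; apply Lsum_nonneg; intros; apply Rmult_le_pos; [apply pow2_ge_0| apply (GU_nn _ _ _ _ _ _ _ _ HS)]).
  assert (HKn : forall t, 0 <= K t) by (intros; unfold K; apply Lsum_nonneg; intros; apply Rmult_le_pos; [apply pow2_ge_0| apply Rmult_le_pos; [apply pow2_ge_0|left; apply (s_m _ _ _ _ _ _ _ _ HS)]]).
  assert (HFG : forall t, F t <= 2 * Gi t).
  { intros t. unfold F, Gi. rewrite <- Lsum_scal. apply Lsum_le; intros x Hx.
    cbv beta.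
    replace (2 * (i x * (GU w m U u x t * m x))) with (i x * (2 * (GU w m U u x t * m x))) by ring.
    rewrite (mGU _ _ _ _ _ _ _ _ HS x t). rewrite <- Lsum_scal. apply Lsum_le; intros y Hy.
    assert (W := s_wnn _ _ _ _ _ _ _ _ HS x y). assert (D := pow2_ge_0 (u y t - u x t)).
    assert (Hei : e x * e y <= i x).
    { unfold i, indic. destruct Rle_dec.
      - destruct (Hen x), (Hen y). nra.
      - unfold e; rewrite (eta_zero rho x0 r x); auto; lra. }
    assert (0 <= (i x - e x * e y) * (w x y * (u y t - u x t) ^ 2)) by (apply Rmult_le_pos; nra).
    nra. }
  assert (HGG : forall t, Gi t <= G3 t).
  { intros t; unfold Gi, G3; apply Lsum_le; intros x Hx. apply Rmult_le_compat_r. apply (GU_nn _ _ _ _ _ _ _ _ HS).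
    unfold i, indic. destruct Rle_dec. rewrite eta_one; lra. apply pow2_ge_0. }
  assert (S1 : RInt (fun t => 1 * PK t + 0 * PK t) (-T) 0 <= RInt (fun t => (-/2) * PdF t + (4 / r ^ 2) * PGi t) (-T) 0).
  { apply RInt_le. lra.
    apply ex_RInt_cont. lra. intros t Ht. apply cont_plus; apply cont_mult; try apply cont_const; (apply Hcont; [auto 10|lra]).
    apply ex_RInt_cont. lra. intros t Ht. apply cont_plus; apply cont_mult; try apply cont_const; (apply Hcont; [auto 10|lra]).
    intros t Ht. assert (KB := keyB w m rho x0 r U u du HS t). fold e i in KB.
    change (K t <= - / 2 * dF t + 4 / r ^ 2 * Gi t) in KB.
    assert (0 <= ps t) by (unfold ps; apply Rmult_le_pos; [lra| left; apply Rinv_0_lt_compat; auto]).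
    unfold PK, PdF, PGi.
    assert (ps t * K t <= ps t * (- / 2 * dF t + 4 / r ^ 2 * Gi t)) by (apply Rmult_le_compat_l; auto).
    lra. }
  rewrite !RInt_lin in S1 by (apply Hex; auto 10; lra).
  assert (S2 : RInt PGi (-T) 0 <= RInt Gi (-T) 0).
  { apply RInt_le; try lra; try (apply Hex; auto 10; lra). intros t Ht. unfold PGi, ps.
    assert ((t + T) / T <= 1) by (apply Rmult_le_reg_r with T; auto; unfold Rdiv; rewrite Rmult_assoc, Rinv_l; lra).
    assert (0 <= (t + T) / T) by (apply Rmult_le_pos; [lra| left; apply Rinv_0_lt_compat; auto]).
    specialize (HGin t). nra. }
  assert (S3 : RInt F (-T) 0 <= RInt (fun t => 2 * Gi t + 0 * Gi t) (-T) 0).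
  { apply RInt_le; try lra; try (apply Hex; auto 10; lra).
    apply ex_RInt_cont. lra. intros t Ht. apply cont_plus; apply cont_mult; try apply cont_const; (apply Hcont; [auto 10|lra]).
    intros t Ht. specialize (HFG t). lra. }
  rewrite RInt_lin in S3 by (apply Hex; auto 10; lra).
  assert (S4 : RInt K (-(r ^ 2)) 0 <= RInt (fun t => 2 * PK t + 0 * PK t) (-(r ^ 2)) 0).
  { apply RInt_le. nra. apply Hex; auto 10; nra.
    apply ex_RInt_cont. nra. intros t Ht. apply cont_plus; apply cont_mult; try apply cont_const; (apply Hcont; [auto 10|lra]).
    intros t Ht. unfold PK, ps.
    assert (/2 <= (t + T) / T) by (apply Rmult_le_reg_r with T; auto; unfold Rdiv; rewrite Rmult_assoc, Rinv_l; unfold T in *; lra).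
    specialize (HKn t). nra. }
  rewrite RInt_lin in S4 by (apply Hex; auto 10; nra).
  assert (S5 : RInt PK (-(r ^ 2)) 0 <= RInt PK (-T) 0).
  { apply RInt_mono_int. unfold T; nra. nra. apply Hex; auto 10; lra.
    intros t Ht. unfold PK, ps. apply Rmult_le_pos; auto. apply Rmult_le_pos; [lra| left; apply Rinv_0_lt_compat; auto]. }
  assert (S6 : RInt Gi (-T) 0 <= RInt G3 (-T) 0).
  { apply RInt_le; try lra; try (apply Hex; auto 10; lra). intros; auto. }
  assert (S7 : RInt G3 (-T) 0 <= RInt G3 (-(9 * r ^ 2)) 0).
  { apply RInt_mono_int. unfold T; nra. lra. apply Hex; auto 10; nra. intros; auto. }
  assert (0 < / T) by (apply Rinv_0_lt_compat; auto).
  assert (0 < 4 / r ^ 2) by (unfold Rdiv; apply Rmult_lt_0_compat; [lra| apply Rinv_0_lt_compat, pow_lt; auto]).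
  assert (Hco : 2 * (/ T + 4 / r ^ 2) = 9 / r ^ 2) by (unfold T; field; lra).
  assert (S8 : RInt K (-(r ^ 2)) 0 <= 2 * (/ T + 4 / r ^ 2) * RInt Gi (-T) 0).
  { assert (/ T * RInt F (-T) 0 <= / T * (2 * RInt Gi (-T) 0 + 0 * RInt Gi (-T) 0)) by (apply Rmult_le_compat_l; lra).
    assert (4 / r ^ 2 * RInt PGi (-T) 0 <= 4 / r ^ 2 * RInt Gi (-T) 0) by (apply Rmult_le_compat_l; lra).
    nra. }
  rewrite Hco in S8.
  assert (0 <= 9 / r ^ 2) by (rewrite <- Hco; lra).
  apply Rle_trans with (1 := S8). apply Rmult_le_compat_l; auto. apply Rle_trans with (RInt G3 (-T) 0); [lra| exact S7].
Qed.

End S4.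

Definition uext (f : R -> R) (L : R) (t : R) : R := if Rle_dec t 0 then f t else f 0 + t * L.

Lemma uext_neg f L t l : t < 0 -> is_derive f t l -> is_derive (uext f L) t l.
Proof. intros Ht H. apply is_derive_ext_loc with f; auto.
  assert (Hd : 0 < - t) by lra.
  exists (mkposreal _ Hd). intros s Hs. simpl in Hs.
  unfold ball in Hs; simpl in Hs; unfold AbsRing_ball in Hs; simpl in Hs. unfold abs, minus, plus, opp in Hs; simpl in Hs.
  unfold uext. destruct (Rle_dec s 0); auto. exfalso. apply Rabs_def2 in Hs. lra. Qed.

Lemma uext_zero f L : filterlim (fun h => (f h - f 0) / h) (at_left 0) (locally L) -> is_derive (uext f L) 0 L.
Proof. intros H. apply is_derive_Reals. intros eps Heps.
  apply filterlim_locally with (eps := mkposreal _ Heps) in H.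
  destruct H as [d Hd]. exists d. intros h Hh0 Hh.
  unfold uext. rewrite Rplus_0_l. destruct (Rle_dec 0 0) as [_|C]; [|lra].
  destruct (Rle_dec h 0) as [Hn|Hn].
  - assert (Hlt : h < 0) by lra.
    assert (B : ball 0 d h).
    { unfold ball; simpl; unfold AbsRing_ball; simpl. unfold abs, minus, plus, opp; simpl. rewrite Ropp_0, Rplus_0_r. auto. }
    specialize (Hd h B Hlt). simpl in Hd. unfold ball in Hd; simpl in Hd; unfold AbsRing_ball in Hd; simpl in Hd.
    unfold abs, minus, plus, opp in Hd; simpl in Hd. auto.
  - replace ((f 0 + h * L - f 0) / h - L) with 0 by (field; auto). rewrite Rabs_R0; auto.
Qed.

Lemma fsum_ext_P {V} (P : V -> Prop) (F G : V -> R) : finite_set P -> (forall y, P y -> F y = G y) -> fsum P F = fsum P G.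
Proof. intros HP H. destruct (finite_enum_spec P HP) as [_ Hi]. rewrite !fsum_Lsum. apply Lsum_ext. intros y Hy; apply H, Hi; auto. Qed.

Lemma cont_fsum {V} (P : V -> Prop) (f : V -> R -> R) t0 : (forall x, In x (finite_enum P) -> continuous (fun t => f x t) t0) ->
  continuous (fun t => fsum P (fun x => f x t)) t0.
Proof. apply cont_Lsum. Qed.

Lemma cont_id' t0 : continuous (fun t : R => t) t0.
Proof. apply continuous_id. Qed.
Lemma cont_div' (f g : R -> R) t0 : continuous f t0 -> continuous (fun t => / g t) t0 -> continuous (fun t => f t / g t) t0.
Proof. intros; unfold Rdiv; apply cont_mult; auto. Qed.

Ltac contU uc := repeat (match goal with
 | |- continuous (fun t => ?c) _ => apply cont_const
 | |- continuous (fun t => t) _ => apply cont_id'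
 | |- continuous (fun t => Lsum _ _) _ => apply cont_Lsum; intros ? ?
 | |- continuous (fun t => fsum _ _) _ => apply cont_fsum; intros ? ?
 | |- continuous (fun t => _ + _) _ => apply cont_plus
 | |- continuous (fun t => _ - _) _ => apply cont_minus
 | |- continuous (fun t => _ * _) _ => apply cont_mult
 | |- continuous (fun t => _ / _) _ => apply cont_div'
 | |- continuous (fun t => _ ^ _) _ => apply cont_pow
 | |- continuous (fun t => _ _ t) _ => apply uc; lra
 | |- continuous _ _ => apply uc; lra
 end).

Theorem theorem3p1 :
  exists C : R,
  forall (V : Type) (w : V -> V -> R) (m : V -> R) (rho : V -> V -> R)
         (s : R) (x0 : V) (u : V -> R -> R) (r : R),
    weighted_graph w m ->
    intrinsic_metric w m rho ->
    (forall (x : V) (a : R), finite_set (rball rho x a)) ->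
    is_lub (jumps w rho) s ->
    ancient_solution w m u ->
    s <= r ->
    r ^ 2 * intQ rho m x0 r (fun x t => Gamma w m (fun y => u y t) x)
    + r ^ 4 * intQ rho m x0 r (fun x t => (u_t u x t) ^ 2)
    <= C * intQ rho m x0 (9 * r) (fun x t => (u x t) ^ 2).
Proof.
  exists 12. intros V w m rho s x0 u r Hg Hi Hfin Hlub Hanc Hsr.
  destruct Hg as [Hsym [Hwnn [Hwxx [Hadj [Hm Hconn]]]]].
  destruct Hi as [Hpm Hintr].
  destruct Hanc as [Hder Hleft].
  assert (Hjmp : forall x y, 0 < w x y -> rho x y <= s).
  { intros x y H. apply (proj1 Hlub). exists x, y; split; auto. }
  assert (Hs0 : 0 <= s).
  { destruct (Classical_Prop.classic (exists z, jumps w rho z)) as [[z [x [y [Hxy Ez]]]]|Hn].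
    - apply Rle_trans with (rho x y). apply Hpm. apply Hjmp; auto.
    - exfalso. assert (s <= s - 1); [|lra]. apply (proj2 Hlub). intros z Hz. exfalso; apply Hn; eauto. }
  destruct (Rle_lt_or_eq_dec 0 r) as [Hr|Hr0]; [lra| |].
  2: { subst r. unfold intQ. replace (-(0^2)) with 0 by ring. replace (-(9*0)^2) with 0 by ring.
       rewrite !RInt_point. unfold zero; simpl. lra. }
  set (U := finite_enum (rball rho x0 (9 * r))).
  destruct (finite_enum_spec _ (Hfin x0 (9 * r))) as [HUnd HUin]. fold U in HUnd, HUin.
  set (ut := fun x => uext (u x) (Laplacian w m (fun y => u y 0) x)).
  assert (ut_eq : forall x t, t <= 0 -> ut x t = u x t).
  { intros x t Ht. unfold ut, uext. destruct (Rle_dec t 0); auto; lra. }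
  assert (ut_fun : forall t, t <= 0 -> (fun y => ut y t) = (fun y => u y t)).
  { intros t Ht. apply FunctionalExtensionality.functional_extensionality. intros; auto. }
  assert (Hadj_U : forall x (F : V -> R), rho x x0 <= 8 * r -> (forall y, w x y = 0 -> F y = 0) ->
            fsum (adj w x) F = Lsum F U).
  { intros x F Hx HF. apply fsum_U; auto.
    - intros y Hy. apply HUin. unfold rball. destruct Hpm as [_ [_ [Hs Ht]]].
      assert (J := Hjmp x y Hy). assert (T := Ht y x x0). rewrite (Hs y x) in T. lra.
    - intros y _ Hy. apply HF. unfold adj in Hy. assert (W := Hwnn x y). lra. }
  assert (HS : setting w m rho x0 r U ut (fun x t => Laplacian w m (fun y => ut y t) x)).
  { constructor.
    - exact Hsym.
    - exact Hwnn.
    - exact Hm.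
    - exact Hpm.
    - exact Hr.
    - intros x y H. apply Rle_trans with s; auto.
    - exact HUnd.
    - intros y. split; intros H; [apply HUin in H; exact H | apply HUin; exact H].
    - intros x Hx. rewrite <- (Hadj_U x (fun y => w x y * rho x y ^ 2)); auto. intros y Hy; rewrite Hy; ring.
    - intros x t Ht. destruct (Rle_lt_or_eq_dec t 0 Ht) as [Hlt|Heq].
      + rewrite (ut_fun t Ht). apply uext_neg; auto.
      + subst t. rewrite (ut_fun 0 (Rle_refl 0)). apply uext_zero. apply Hleft.
    - intros x t Hx. unfold Laplacian, LU. apply Hadj_U; auto. intros y Hy; rewrite Hy; unfold Rdiv; ring. }
  assert (uc : forall x t, t <= 0 -> continuous (ut x) t) by (intros; apply (u_cont w m rho x0 r U ut _ HS); auto).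
  assert (HA := coreA w m rho x0 r U ut _ HS).
  assert (HB := coreB w m rho x0 r U ut _ HS).
  set (A3 := RInt (fun t => Lsum (fun x => eta rho x0 (3 * r) x ^ 2 * (GU w m U ut x t * m x)) U) (- (9 * r ^ 2)) 0) in *.
  set (M9 := RInt (fun t => Lsum (fun x => ut x t ^ 2 * m x) U) (- (81 * r ^ 2)) 0) in *.
  assert (Hr2 : 0 < r ^ 2) by (apply pow_lt; auto).
  assert (HA1 : intQ rho m x0 r (fun x t => Gamma w m (fun y => u y t) x) <= A3).
  { unfold intQ.
    rewrite (RInt_ext _ (fun t => fsum (rball rho x0 r) (fun x => Gamma w m (fun y => ut y t) x * m x))).
    2: { intros t Ht. rewrite Rmin_left, Rmax_right in Ht by lra. cbv beta. rewrite (ut_fun t); auto; lra. }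
    apply Rle_trans with (RInt (fun t => Lsum (fun x => eta rho x0 (3 * r) x ^ 2 * (GU w m U ut x t * m x)) U) (- r ^ 2) 0).
    - apply RInt_le. lra.
      + apply ex_RInt_cont. lra. intros t Ht. unfold Gamma. contU uc.
      + apply ex_RInt_cont. lra. intros t Ht. unfold GU. contU uc.
      + intros t Ht. rewrite (fsum_ext_P _ _ (fun x => eta rho x0 (3 * r) x ^ 2 * (GU w m U ut x t * m x))); auto.
        * apply fsum_U_le; auto. intros y Hy. apply HUin. unfold rball in *; lra.
          intros y _. apply Rmult_le_pos. apply pow2_ge_0. apply (GU_nn _ _ _ _ _ _ _ _ HS).
        * intros y Hy. unfold rball in Hy. rewrite eta_one; try lra. unfold Gamma, GU.
          rewrite Hadj_U; [ring| lra |]. intros z Hz; rewrite Hz; unfold Rdiv; ring.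
    - unfold A3. apply RInt_mono_int. nra. nra.
      + apply ex_RInt_cont. nra. intros t Ht. unfold GU. contU uc.
      + intros t Ht. apply Lsum_nonneg. intros; apply Rmult_le_pos. apply pow2_ge_0. apply (GU_nn _ _ _ _ _ _ _ _ HS). }
  assert (HB1 : intQ rho m x0 r (fun x t => (u_t u x t) ^ 2) <= 9 / r ^ 2 * A3).
  { unfold intQ.
    rewrite (RInt_ext _ (fun t => fsum (rball rho x0 r) (fun x => Laplacian w m (fun y => ut y t) x ^ 2 * m x))).
    2: { intros t Ht. rewrite Rmin_left, Rmax_right in Ht by lra. cbv beta. apply fsum_ext. intros x.
         unfold u_t. rewrite (is_derive_unique _ _ _ (Hder x t ltac:(lra))). rewrite (ut_fun t); auto; lra. }
    eapply Rle_trans; [|apply HB].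
    - apply RInt_le. lra.
      + apply ex_RInt_cont. lra. intros t Ht. unfold Laplacian. contU uc.
      + apply ex_RInt_cont. lra. intros t Ht. unfold LU. contU uc.
      + intros t Ht. rewrite (fsum_ext_P _ _ (fun x => eta rho x0 r x ^ 2 * (LU w m U ut x t ^ 2 * m x))); auto.
        * apply fsum_U_le; auto. intros y Hy. apply HUin. unfold rball in *; lra.
          intros y _. apply Rmult_le_pos. apply pow2_ge_0. apply Rmult_le_pos. apply pow2_ge_0. left; auto.
        * intros y Hy. unfold rball in Hy. rewrite eta_one; try lra. unfold Laplacian, LU.
          rewrite Hadj_U; [ring| lra |]. intros z Hz; rewrite Hz; unfold Rdiv; ring. }
  assert (HM : intQ rho m x0 (9 * r) (fun x t => (u x t) ^ 2) = M9).
  { unfold intQ, M9. replace (- (9 * r) ^ 2) with (- (81 * r ^ 2)) by ring.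
    apply RInt_ext. intros t Ht. rewrite Rmin_left, Rmax_right in Ht by nra. cbv beta.
    rewrite fsum_Lsum. fold U. apply Lsum_ext. intros x _. rewrite ut_eq; auto; lra. }
  rewrite HM.
  assert (HM0 : 0 <= M9).
  { unfold M9. apply RInt_ge_0. nra.
    apply ex_RInt_cont. nra. intros t Ht. contU uc.
    intros t Ht. apply Lsum_nonneg. intros; apply Rmult_le_pos. apply pow2_ge_0. left; auto. }
  assert (HA0 : 0 <= A3).
  { unfold A3. apply RInt_ge_0. nra.
    apply ex_RInt_cont. nra. intros t Ht. unfold GU. contU uc.
    intros t Ht. apply Lsum_nonneg. intros; apply Rmult_le_pos. apply pow2_ge_0. apply (GU_nn _ _ _ _ _ _ _ _ HS). }
  assert (E1 : r ^ 2 * intQ rho m x0 r (fun x t => Gamma w m (fun y => u y t) x) <= r ^ 2 * A3) by (apply Rmult_le_compat_l; lra).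
  assert (E2 : r ^ 4 * intQ rho m x0 r (fun x t => (u_t u x t) ^ 2) <= r ^ 4 * (9 / r ^ 2 * A3)).
  { apply Rmult_le_compat_l; auto. apply pow_le; lra. }
  replace (r ^ 4 * (9 / r ^ 2 * A3)) with (9 * (r ^ 2 * A3)) in E2 by (field; lra).
  assert (E3 : r ^ 2 * A3 <= r ^ 2 * (10 / (9 * r ^ 2) * M9)) by (apply Rmult_le_compat_l; lra).
  replace (r ^ 2 * (10 / (9 * r ^ 2) * M9)) with (10 / 9 * M9) in E3 by (field; lra).
  lra.
Qed.
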